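(* Let $\mathbb{K}$ be an algebraically closed field of characteristic zero, let $D$ be a simple derivation of $\mathbb{K}[x,y]$ and let $\rho\in\mathrm{Aut}(D)$. If $\rho$ stabilizes the ideal $(x)\subset\mathbb{K}[x,y]$ generated by $x$, then $\rho=\mathrm{id}$.
   Context: A derivation of $\mathbb{K}[x,y]$ is a $\mathbb{K}$-linear map $D$ with $D(fg)=gD(f)+fD(g)$. $D$ is simple if there is no ideal $I$ with $(0)\neq I\neq \mathbb{K}[x,y]$ and $D(I)\subseteq I$. $\mathrm{Aut}(D)$ denotes the group of $\mathbb{K}$-algebra automorphisms $\rho$ of $\mathbb{K}[x,y]$ with $\rho D=D\rho$. *)

(* Defs.v *)
From HB Require Import structures.
From mathcomp Require Import all_boot all_algebra.
From mathcomp Require Import mpoly.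
Set Implicit Arguments. Unset Strict Implicit. Unset Printing Implicit Defensive.
Import GRing.Theory.
Local Open Scope ring_scope.

(* K[x,y] is {mpoly K[2]}, with x = 'X_0 and y = 'X_1. *)

Definition is_derivation (K : fieldType) (D : {mpoly K[2]} -> {mpoly K[2]}) : Prop :=
  (forall (a : K) (p q : {mpoly K[2]}), D (a *: p + q) = a *: D p + D q) /\
  (forall f g : {mpoly K[2]}, D (f * g) = g * D f + f * D g).

Definition is_ideal (K : fieldType) (I : {mpoly K[2]} -> Prop) : Prop :=
  I 0 /\
  (forall a b, I a -> I b -> I (a + b)) /\
  (forall r a, I a -> I (r * a)).

Definition simple_derivation (K : fieldType) (D : {mpoly K[2]} -> {mpoly K[2]}) : Prop :=
  is_derivation D /\
  forall I : {mpoly K[2]} -> Prop, is_ideal I -> (forall f, I f -> I (D f)) ->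
    (forall f, I f -> f = 0) \/ (forall f, I f).

Definition is_Kalg_automorphism (K : fieldType) (rho : {mpoly K[2]} -> {mpoly K[2]}) : Prop :=
  bijective rho /\
  (forall (a : K) (p q : {mpoly K[2]}), rho (a *: p + q) = a *: rho p + rho q) /\
  (forall f g, rho (f * g) = rho f * rho g) /\
  rho 1 = 1.

Definition in_AutD (K : fieldType) (D rho : {mpoly K[2]} -> {mpoly K[2]}) : Prop :=
  is_Kalg_automorphism rho /\ forall f, rho (D f) = D (rho f).

Definition ideal_x (K : fieldType) (f : {mpoly K[2]}) : Prop :=
  exists g : {mpoly K[2]}, f = g * 'X_(ord0 : 'I_2).

(* Main.v *)
Require Import Defs.
From HB Require Import structures.
From mathcomp Require Import all_boot all_algebra.
From mathcomp Require Import mpoly.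
From mathcomp Require Import zify.
From Stdlib Require Import Classical.
Set Implicit Arguments. Unset Strict Implicit. Unset Printing Implicit Defensive.
Import GRing.Theory.
Local Open Scope ring_scope.

Section Gen.
Variable K : fieldType.
Hypothesis hchar : [pchar K] =i pred0.

Lemma natr_injK (n m : nat) : n%:R = m%:R :> K -> n = m.
Proof.
have H0 := (pcharf0P K).1 hchar.
wlog le : n m / (m <= n)%N.
  move=> W h; case: (leqP m n) => hmn; first exact: W.
  by apply/esym/W => //; apply: ltnW.
move/eqP; rewrite -subr_eq0 -natrB // H0 subn_eq0 => h; apply/eqP.
by rewrite eqn_leq h le.
Qed.

Lemma natr_injR (n m : nat) (a : {poly K}) : a != 0 ->
  n%:R * a = m%:R * a -> n = m.
Proof.
move=> a0 /(mulIf a0); rewrite -!polyC_natr => /polyC_inj.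
exact: natr_injK.
Qed.

Lemma zero_everywhere (p : {poly K}) : (forall s, p.[s] = 0) -> p = 0.
Proof.
move=> H; apply: (@roots_geq_poly_eq0 _ p (mkseq (fun n => n%:R) (size p))).
- by apply/allP => s /mapP [i _ ->]; rewrite /root H.
- by apply: mkseq_uniq => n m; apply: natr_injK.
- by rewrite size_mkseq.
Qed.

Lemma periodic (f : {poly {poly K}}) (a : {poly K}) : a != 0 ->
  f \Po ('X + a%:P) = f -> f = (f`_0)%:P.
Proof.
move=> a0 Hf; apply/eqP; rewrite -subr_eq0; apply/eqP.
set g := f - _.
have Hg : g \Po ('X + a%:P) = g by rewrite /g comp_polyB comp_polyC Hf.
have Hr : forall n : nat, g.[n%:R * a] = 0.
  elim => [|n IH]; first by rewrite mul0r horner_coef0 /g coefB coefC subrr.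
  have E : g.[n%:R * a + a] = (g \Po ('X + a%:P)).[n%:R * a].
    by rewrite horner_comp; congr (g.[_]); rewrite hornerD hornerX hornerC.
  by rewrite mulrSr mulrDl mul1r E Hg.
apply: (@roots_geq_poly_eq0 _ g (mkseq (fun n => n%:R * a) (size g))).
- by apply/allP => s /mapP [i _ ->]; rewrite /root Hr.
- by apply: mkseq_uniq => n m; apply: natr_injR.
- by rewrite size_mkseq.
Qed.

Lemma antideriv (u : {poly K}) : exists F : {poly K}, F^`() = u.
Proof.
exists (\poly_(i < (size u).+1) (if i is j.+1 then u`_j / j.+1%:R else 0)).
apply/polyP => i; rewrite coef_deriv coef_poly ltnS.
case: ltnP => hi.
  rewrite -[_ *+ i.+1]mulr_natr divfK //.
  by apply/eqP => /(@natr_injK _ 0).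
by rewrite mul0rn nth_default.
Qed.

End Gen.

Section Basic.
Variable K : closedFieldType.
Hypothesis hchar : [pchar K] =i pred0.
Local Notation R := {poly K}.
Local Notation S := {poly {poly K}}.
Definition xS : S := ('X : R)%:P.
Definition cst (k : K) : S := (k%:P)%:P.

Lemma ext_morph (T : comNzRingType) (f1 f2 : S -> T) :
  (forall a b, f1 (a + b) = f1 a + f1 b) -> (forall a b, f1 (a * b) = f1 a * f1 b) ->
  (forall a b, f2 (a + b) = f2 a + f2 b) -> (forall a b, f2 (a * b) = f2 a * f2 b) ->
  (forall k, f1 (cst k) = f2 (cst k)) -> f1 xS = f2 xS -> f1 'X = f2 'X ->
  forall f, f1 f = f2 f.
Proof.
move=> A1 M1 A2 M2 Ck Cx Cy.
have CR : forall r : R, f1 r%:P = f2 r%:P.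
  elim/poly_ind => [|r c IH].
    by have := Ck 0; rewrite /cst !polyC0.
  by rewrite polyCD polyCM A1 A2 M1 M2 IH Cx Ck.
elim/poly_ind => [|f c IH].
  by have := CR 0; rewrite polyC0.
by rewrite A1 A2 M1 M2 IH Cy CR.
Qed.

Definition ev (s t : K) (f : S) : K := (map_poly (horner_eval s) f).[t].

Lemma evD s t a b : ev s t (a + b) = ev s t a + ev s t b.
Proof. by rewrite /ev rmorphD hornerD. Qed.
Lemma evM s t a b : ev s t (a * b) = ev s t a * ev s t b.
Proof. by rewrite /ev rmorphM hornerM. Qed.
Lemma evC s t (r : R) : ev s t r%:P = r.[s].
Proof. by rewrite /ev map_polyC hornerC. Qed.
Lemma evcst s t k : ev s t (cst k) = k.
Proof. by rewrite /cst evC hornerC. Qed.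
Lemma evx s t : ev s t xS = s.
Proof. by rewrite /xS evC hornerX. Qed.
Lemma evy s t : ev s t 'X = t.
Proof. by rewrite /ev map_polyX hornerX. Qed.
Lemma ev1 s t : ev s t 1 = 1.
Proof. by rewrite /ev rmorph1 hornerC. Qed.
Lemma evB s t a b : ev s t (a - b) = ev s t a - ev s t b.
Proof. by rewrite /ev rmorphB hornerD hornerN. Qed.

End Basic.

Section Main.
Variable K : closedFieldType.
Local Notation R := {poly K}.
Local Notation S := {poly {poly K}}.
Local Notation xS := (@xS K).
Local Notation cst := (@cst K).
Local Notation ev := (@ev K).

Definition idealS (I : S -> Prop) :=
  I 0 /\ (forall a b, I a -> I b -> I (a + b)) /\ (forall c a, I a -> I (c * a)).

Variables D r : S -> S.
Hypothesis DD : forall a b, D (a + b) = D a + D b.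
Hypothesis DK : forall k a, D (cst k * a) = cst k * D a.
Hypothesis DL : forall f g, D (f * g) = g * D f + f * D g.
Hypothesis Dsimp : forall I : S -> Prop, idealS I -> (forall f, I f -> I (D f)) ->
   (forall f, I f -> f = 0) \/ (forall f, I f).
Hypothesis rbij : bijective r.
Hypothesis rD : forall a b, r (a + b) = r a + r b.
Hypothesis rM : forall a b, r (a * b) = r a * r b.
Hypothesis r1 : r 1 = 1.
Hypothesis rK : forall k, r (cst k) = cst k.
Hypothesis rDc : forall f, r (D f) = D (r f).

Lemma idem0 (x : S) : x = x + x -> x = 0.
Proof. by move=> h; apply: (@addrI _ x); rewrite addr0 -h. Qed.
Lemma D0 : D 0 = 0.
Proof. by apply: idem0; have := DD 0 0; rewrite addr0. Qed.
Lemma DN a : D (- a) = - D a.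
Proof. by apply/eqP; rewrite -addr_eq0 -DD addNr D0. Qed.
Lemma DB a b : D (a - b) = D a - D b.
Proof. by rewrite DD DN. Qed.
Lemma Dcst k : D (cst k) = 0.
Proof.
have D1 : D 1 = 0.
  by apply: idem0; have := DL 1 1; rewrite !mul1r.
by rewrite -[cst k]mulr1 DK D1 mulr0.
Qed.

Lemma r0 : r 0 = 0.
Proof. by apply: idem0; have := rD 0 0; rewrite addr0. Qed.
Lemma rN a : r (- a) = - r a.
Proof. by apply/eqP; rewrite -addr_eq0 -rD addNr r0. Qed.
Lemma rB a b : r (a - b) = r a - r b.
Proof. by rewrite rD rN. Qed.

Lemma nontriv (I : S -> Prop) : idealS I -> (forall f, I f -> I (D f)) ->
  forall a, I a -> a != 0 -> ~ I 1 -> False.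
Proof.
move=> HI HD a Ia a0 N1; case: (Dsimp HI HD) => [H|H].
  by move: a0; rewrite (H _ Ia) eqxx.
exact: N1.
Qed.

Lemma principal (z w : S) (s t : K) : z != 0 -> D z = w * z -> ev s t z = 0 -> False.
Proof.
move=> z0 Dz evz.
pose I := fun f => exists g, f = g * z.
apply: (@nontriv I _ _ z _ z0).
- split; first by exists 0; rewrite mul0r.
  split; first by move=> a b [g ->] [h ->]; exists (g + h); rewrite mulrDl.
  by move=> c a [g ->]; exists (c * g); rewrite mulrA.
- move=> f [g ->]; exists (D g + g * w).
  by rewrite DL Dz mulrDl mulrA mulrC.
- by exists 1; rewrite mul1r.
- move=> [g] /(congr1 (ev s t)); rewrite ev1 evM evz mulr0 => /eqP.
  by rewrite oner_eq0.
Qed.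

Lemma fixed_point : (exists s t, ev s t (r xS) = s /\ ev s t (r 'X) = t) -> forall f, r f = f.
Proof.
move=> [s [t [Hx Hy]]].
have Hev : forall f, ev s t (r f) = ev s t f.
  apply: ext_morph.
  - by move=> a b; rewrite rD evD.
  - by move=> a b; rewrite rM evM.
  - by move=> a b; rewrite evD.
  - by move=> a b; rewrite evM.
  - by move=> k; rewrite rK.
  - by rewrite Hx evx.
  - by rewrite Hy evy.
pose J := fun h => forall I : S -> Prop, idealS I -> (forall f, I (r f - f)) -> I h.
have JI : idealS J.
  split; first by move=> I [] //.
  split.
    move=> a b Ja Jb I HI Hg; have [_ [Iadd _]] := HI.
    by apply: Iadd; [exact: Ja | exact: Jb].
  move=> c a Ja I HI Hg; have [_ [_ Imul]] := HI.
  by apply: Imul; exact: Ja.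
have JD : forall h, J h -> J (D h).
  move=> h Jh I HI Hg.
  pose I' := fun h => I h /\ I (D h).
  have HI' : idealS I'.
    case: HI => I0 [Iadd Imul].
    split; first by split; rewrite ?D0.
    split; first by move=> a b [Ia IDa] [Ib IDb]; split; [apply: Iadd|rewrite DD; apply: Iadd].
    move=> c a [Ia IDa]; split; first exact: Imul.
    by rewrite DL; apply: Iadd; [rewrite mulrC|]; apply: Imul.
  have : I' h.
    apply: Jh => // f; split => //.
    by rewrite DB -rDc.
  by case.
case: (Dsimp JI JD) => [H|H].
  move=> f; apply/eqP; rewrite -subr_eq0; apply/eqP; apply: H => I HI Hg; exact: Hg.
exfalso.
have : ev s t 1 = 0.
  apply: (H 1 (fun h => ev s t h = 0)); last by move=> f; rewrite evB Hev subrr.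
  split; first by rewrite /ev rmorph0 horner0.
  split; first by move=> a b Ha Hb; rewrite evD Ha Hb addr0.
  by move=> c a Ha; rewrite evM Ha mulr0.
by rewrite ev1 => /eqP; rewrite oner_eq0.
Qed.


Lemma nat_sum2 (u v : nat) : (0 < u)%N -> (0 < v)%N -> (u + v).-1 = 1%N -> u = 1%N /\ v = 1%N.
Proof. rewrite -subn1; lia. Qed.
Lemma nat_sum3 (u v : nat) : (0 < u)%N -> (0 < v)%N -> (u + v).-1 = 2%N -> u = 1%N \/ v = 1%N.
Proof. rewrite -subn1; lia. Qed.

Lemma xS_neq0 : xS != 0.
Proof. by rewrite /xS polyC_eq0 polyX_eq0. Qed.

Lemma xS_not_cst k : xS != cst k.
Proof.
apply/eqP; rewrite /xS /cst => /polyC_inj h.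
by have := size_polyX K; rewrite h size_polyC; case: (k != 0).
Qed.

Lemma rx_scalar : (exists g, r xS = g * xS) -> exists k, k != 0 /\ r xS = cst k * xS.
Proof.
move=> [g Hg]; case: rbij => sg rs sr.
have sM : forall a b, sg (a * b) = sg a * sg b.
  by move=> a b; rewrite -{1}(sr a) -{1}(sr b) -rM rs.
have Hx : xS = sg g * sg xS by rewrite -sM -Hg rs.
have nA : sg g != 0 by apply: contra_neq xS_neq0 => h; rewrite Hx h mul0r.
have nB : sg xS != 0 by apply: contra_neq xS_neq0 => h; rewrite Hx h mulr0.
have sx1 : size xS = 1%N by rewrite /xS size_polyC polyX_eq0.
have : size (sg g * sg xS) = 1%N by rewrite -Hx.
rewrite size_mul // => hs.
have pA : (0 < size (sg g))%N by rewrite size_poly_gt0.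
have pB : (0 < size (sg xS))%N by rewrite size_poly_gt0.
have [sA sB] := nat_sum2 pA pB hs.
move/eqP: sA => sA; move/eqP: sB => sB.
case/size_poly1P: sA => a a0 Ea; case/size_poly1P: sB => b b0 Eb.
have Hab : a * b = 'X by apply: polyC_inj; rewrite polyCM -Ea -Eb -Hx.
have : size (a * b) = 2%N by rewrite Hab size_polyX.
rewrite size_mul // => hab.
have [sa1|sb1] : size a == 1%N \/ size b == 1%N.
  have pa : (0 < size a)%N by rewrite size_poly_gt0.
  have pb : (0 < size b)%N by rewrite size_poly_gt0.
  by case: (nat_sum3 pa pb hab) => /eqP; [left|right].
- case/size_poly1P: sa1 => k k0 Ek.
  exists k; split => //.
  by rewrite Hg -[g]sr Ea Ek rK.
- case/size_poly1P: sb1 => k k0 Ek; exfalso.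
  have : r (sg xS) = r (cst k) by rewrite Eb Ek.
  by rewrite sr rK => /eqP; rewrite (negbTE (xS_not_cst k)).
Qed.


Hypothesis hchar : [pchar K] =i pred0.
Hypothesis rx : exists g, r xS = g * xS.

Definition pi (f : S) : R := map_poly (horner_eval 0) f.
Lemma piD a b : pi (a + b) = pi a + pi b. Proof. exact: rmorphD. Qed.
Lemma piM a b : pi (a * b) = pi a * pi b. Proof. exact: rmorphM. Qed.
Lemma pix : pi xS = 0.
Proof. by rewrite /pi /xS map_polyC /= horner_evalE hornerX. Qed.
Lemma picst k : pi (cst k) = k%:P.
Proof. by rewrite /pi /cst map_polyC /= horner_evalE hornerC. Qed.
Lemma piX : pi 'X = 'X.
Proof. by rewrite /pi map_polyX. Qed.
Lemma ev_pi t f : ev 0 t f = (pi f).[t].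
Proof. by []. Qed.

Lemma pidiv f : pi f = 0 -> exists g, f = g * xS.
Proof.
move=> Hf; exists (map_poly (fun q : R => q %/ 'X) f).
apply/polyP => i; rewrite /xS coefMC coef_map_id0 ?div0p //.
have : (pi f)`_i = 0 by rewrite Hf coef0.
rewrite /pi coef_map /= horner_evalE => h.
rewrite divpK //.
by rewrite -['X]subr0 -polyC0 dvdp_XsubCl /root h.
Qed.

Lemma Dx_pi : pi (D xS) != 0.
Proof.
apply/eqP => /pidiv [w Hw].
by apply: (@principal xS w 0 0 xS_neq0 Hw); rewrite evx.
Qed.

Lemma step_k : exists k, k != 0 /\ r xS = cst k * xS.
Proof. exact: rx_scalar. Qed.

Lemma main_id : forall f, r f = f.
Proof.
have [k [k0 Hk]] := step_k.
set Q := r 'X.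
have [/closed_rootP [t Ht] | ] := boolP (size (pi Q - 'X) != 1%N).
  apply: fixed_point; exists 0, t; split.
    by rewrite Hk evM evx mulr0.
  by move: Ht; rewrite /root ev_pi hornerD hornerN hornerX subr_eq0 => /eqP.
rewrite negbK => /size_poly1P [b b0 Hb].
have HQ0 : pi Q = 'X + b%:P by rewrite -Hb addrC subrK.
have pir : forall f, pi (r f) = pi f \Po ('X + b%:P).
  apply: ext_morph.
  - by move=> u v; rewrite rD piD.
  - by move=> u v; rewrite rM piM.
  - by move=> u v; rewrite piD comp_polyD.
  - by move=> u v; rewrite piM comp_polyM.
  - by move=> c; rewrite rK picst comp_polyC.
  - by rewrite Hk piM pix mulr0 comp_poly0.
  - by rewrite HQ0 piX comp_polyX.
have k1 : k = 1.
  have E : pi (r (D xS)) = k%:P * pi (D xS) by rewrite rDc Hk DK piM picst.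
  rewrite pir in E.
  have := congr1 lead_coef E.
  rewrite lead_coef_comp ?size_XaddC // lead_coefXaddC expr1n mulr1 mul_polyC lead_coefZ.
  move/eqP; rewrite -{1}[lead_coef (pi (D xS))]mul1r (inj_eq (mulIf _)) ?lead_coef_eq0 ?Dx_pi //.
  by move/eqP.
have rxx : r xS = xS by rewrite Hk k1 /cst !polyC1 mul1r.
have [[s Hs]|Hall] := classic (exists s, size (map_poly (horner_eval s) Q - 'X) != 1%N).
  case/closed_rootP: Hs => t Ht.
  apply: fixed_point; exists s, t; split; first by rewrite rxx evx.
  by move: Ht; rewrite /root /ev hornerD hornerN hornerX subr_eq0 => /eqP.
have Hs : forall s, size (map_poly (horner_eval s) Q - 'X) = 1%N.
  by move=> s; apply/eqP; apply/negPn/negP => h; apply: Hall; exists s.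
have Hc : forall s i, (0 < i)%N -> (Q`_i).[s] = (i == 1%N)%:R.
  move=> s i hi.
  have : (map_poly (horner_eval s) Q - 'X)`_i = 0 by rewrite nth_default // Hs.
  by rewrite coefB coef_map /= horner_evalE coefX => /eqP; rewrite subr_eq0 => /eqP.
have Hc0 : forall s, (Q`_0).[s] != 0.
  move=> s; have /eqP/size_poly1P [c c0 Ec] := Hs s.
  have := congr1 (fun z : R => z`_0) Ec; rewrite /= coefB coef_map /= horner_evalE coefX coefC /= subr0.
  by move=> ->.
have Q1 : Q`_1 = 1.
  apply/eqP; rewrite -subr_eq0; apply/eqP; apply: (zero_everywhere hchar) => s.
  by rewrite hornerD hornerN hornerC Hc // subrr.
have Qi : forall i, (1 < i)%N -> Q`_i = 0.
  move=> i hi; apply: (zero_everywhere hchar) => s; rewrite Hc ?(ltnW hi) //.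
  by rewrite (gtn_eqF hi).
have [b1 b10 Eb1] : exists2 b1, b1 != 0 & Q`_0 = b1%:P.
  apply/size_poly1P; apply/negPn/negP => /closed_rootP [s Hs0].
  by move: (Hc0 s); rewrite (rootP Hs0) eqxx.
have EQ : Q = 'X + cst b1.
  apply/polyP => i; rewrite coefD coefX /cst coefC.
  case: i => [|[|i]] /=; first by rewrite Eb1 add0r.
    by rewrite Q1 addr0.
  by rewrite Qi // addr0.
have rT : forall f, r f = f \Po ('X + (b1%:P)%:P).
  apply: ext_morph.
  - by move=> u v; rewrite rD.
  - by move=> u v; rewrite rM.
  - by move=> u v; rewrite comp_polyD.
  - by move=> u v; rewrite comp_polyM.
  - by move=> c; rewrite rK /cst comp_polyC.
  - by rewrite rxx /xS comp_polyC.
  - by rewrite -/Q EQ comp_polyX.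
have cb : (b1%:P : R) != 0 by rewrite polyC_eq0.
have PDx : D xS = ((D xS)`_0)%:P.
  by apply: (periodic hchar cb); rewrite -rT rDc rxx.
have PDy : D 'X = ((D 'X)`_0)%:P.
  by apply: (periodic hchar cb); rewrite -rT rDc -/Q EQ DD Dcst addr0.
have DR : forall a : R, D a%:P = (a^`())%:P * D xS.
  elim/poly_ind => [|a c IH]; first by rewrite polyC0 D0 deriv0 polyC0 mul0r.
  rewrite polyCD polyCM DD DL IH (Dcst c) addr0 derivMXaddC /xS.
  rewrite polyCD polyCM mulrDl addrC; congr (_ + _); rewrite mulrA; congr (_ * _); exact: mulrC.
set p := (D xS)`_0; set q := (D 'X)`_0.
have [/closed_rootP [s Hsr]|] := boolP (size p != 1%N).
  case/factor_theorem: Hsr => p' Ep.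
  exfalso.
  apply: (@principal (xS - cst s) (p'%:P) s 0).
  - by rewrite subr_eq0 xS_not_cst.
  - by rewrite DB Dcst subr0 PDx -/p Ep polyCM /xS /cst polyCB.
  - by rewrite evB evx evcst subrr.
rewrite negbK => /size_poly1P [p0 p00 Ep].
have [F HF] := antideriv hchar (q * (p0^-1)%:P).
exfalso.
apply: (@principal ('X - F%:P) 0 0 F.[0]).
- apply/eqP => /(congr1 (fun z : S => z`_1)); rewrite coefB coefX coefC /= subr0 coef0.
  by move/eqP; rewrite oner_eq0.
- rewrite mul0r DB PDy DR HF PDx -/p -/q Ep -polyCM -mulrA -polyCM mulVf //.
  by rewrite polyC1 mulr1 subrr.
- by rewrite evB evy evC subrr.
Qed.

End Main.

Section T.
Variable K : closedFieldType.
Local Notation S := {poly {poly K}}.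
Local Notation MP := {mpoly K[2]}.
Definition chiR : {rmorphism {poly K} -> MP} :=
  (horner_eval ('X_(ord0 : 'I_2) : MP)) \o (map_poly (@mpolyC 2 K)).
Definition chi : {rmorphism S -> MP} :=
  (horner_eval ('X_(ord_max : 'I_2) : MP)) \o (map_poly chiR).
Arguments chi : simpl never.
Definition ccK : {rmorphism K -> S} := (@polyC {poly K}) \o (@polyC K).
Definition hh (i : 'I_2) : S := if i == ord0 then xS K else 'X.
Definition psi (p : MP) : S := mmap ccK hh p.

Arguments psi : simpl never.
Lemma psiD a b : psi (a + b) = psi a + psi b. Proof. exact: mmapD. Qed.
Lemma psiM a b : psi (a * b) = psi a * psi b. Proof. exact: rmorphM. Qed.
Lemma psi0 : psi 0 = 0. Proof. exact: mmap0. Qed.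
Lemma psiC c : psi c%:MP = cst c. Proof. by rewrite /psi mmapC. Qed.
Lemma psiZ c p : psi (c *: p) = cst c * psi p. Proof. by rewrite /psi mmapZ. Qed.
Lemma psiXi i : psi 'X_i = hh i. Proof. by rewrite /psi mmapX mmap1U. Qed.

Lemma chi_cst c : chi (cst c) = c%:MP.
Proof. by rewrite /chi /cst /= map_polyC horner_evalE hornerC /= map_polyC horner_evalE hornerC. Qed.
Lemma chi_hh i : chi (hh i) = 'X_i.
Proof.
rewrite /hh; case: ifP => [/eqP ->|hi].
  by rewrite /chi /xS /= map_polyC /= !horner_evalE hornerC map_polyX hornerX.
rewrite /chi /= map_polyX horner_evalE hornerX; congr 'X_ _.
by apply/val_inj; case: i hi => [[|[|m]] //=] hm.
Qed.

Lemma psiK f : psi (chi f) = f.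
Proof.
apply: (@ext_morph K S (fun f => psi (chi f)) id); cbv beta.
- by move=> a b; rewrite rmorphD psiD.
- by move=> a b; rewrite rmorphM psiM.
- by [].
- by [].
- by move=> k; rewrite chi_cst psiC.
- by have := chi_hh ord0; rewrite /hh eqxx => ->; rewrite psiXi.
- by have := chi_hh ord_max; rewrite /hh /= => ->; rewrite psiXi.
Qed.

Lemma chiK p : chi (psi p) = p.
Proof.
elim/mpolyind: p => [|c m p _ _ IH]; first by rewrite psi0 rmorph0.
rewrite psiD rmorphD IH psiZ rmorphM chi_cst mul_mpolyC; congr (_ *: _ + _).
rewrite /psi mmapX /mmap1 rmorph_prod mpolyXE_id; apply: eq_bigr => i _.
by rewrite rmorphXn chi_hh.
Qed.
End T.

Theorem lemma2p4 (K : closedFieldType) (hchar : [pchar K] =i pred0)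
  (D rho : {mpoly K[2]} -> {mpoly K[2]}) :
  simple_derivation D -> in_AutD D rho ->
  (forall f, ideal_x f -> ideal_x (rho f)) ->
  forall f, rho f = f.
Proof.
move=> [[Dlin DLe] Dsimp] [[rbij [rlin [rM r1]]] rDc] rX.
have DD : forall a b, D (a + b) = D a + D b.
  by move=> a b; have := Dlin 1 a b; rewrite !scale1r.
have D0 : D 0 = 0.
  by apply: (@addrI _ (D 0)); rewrite addr0 -DD addr0.
have DZ : forall k a, D (k *: a) = k *: D a.
  by move=> k a; have := Dlin k a 0; rewrite addr0 D0 addr0.
have rD : forall a b, rho (a + b) = rho a + rho b.
  by move=> a b; have := rlin 1 a b; rewrite !scale1r.
have rho0 : rho 0 = 0.
  by apply: (@addrI _ (rho 0)); rewrite addr0 -rD addr0.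
have rZ : forall k a, rho (k *: a) = k *: rho a.
  by move=> k a; have := rlin k a 0; rewrite addr0 rho0 addr0.
pose D' := fun f => psi (D (chi K f)).
pose r' := fun f => psi (rho (chi K f)).
have H := @main_id K D' r'.
have key : forall f, r' f = f.
  apply: H => //.
  - by move=> a b; rewrite /D' rmorphD DD psiD.
  - by move=> k a; rewrite /D' rmorphM chi_cst mul_mpolyC DZ psiZ.
  - by move=> f g; rewrite /D' rmorphM DLe psiD !psiM !psiK.
  - move=> I [I0 [Iadd Imul]] ID.
    have HI : is_ideal (fun p => I (psi p)).
      split; first by rewrite psi0.
      split; first by move=> a b Ia Ib; rewrite psiD; apply: Iadd.
      by move=> c a Ia; rewrite psiM; apply: Imul.
    have HID : forall f, I (psi f) -> I (psi (D f)).
      by move=> f /ID; rewrite /D' chiK.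
    case: (Dsimp _ HI HID) => [Z|A]; [left|right] => f.
      move=> Hf; have Hc : I (psi (chi K f)) by rewrite psiK.
      by rewrite -(psiK f) (Z _ Hc) psi0.
    by have := A (chi K f); rewrite psiK.
  - case: rbij => g rg gr.
    exists (fun f => psi (g (chi K f))) => f; rewrite /r' chiK ?rg ?gr psiK //.
  - by move=> a b; rewrite /r' rmorphD rD psiD.
  - by move=> a b; rewrite /r' rmorphM rM psiM.
  - by move=> k; rewrite /r' chi_cst -[k%:MP]mulr1 mul_mpolyC rZ r1 -mul_mpolyC mulr1 psiC.
  - by move=> f; rewrite /r' /D' chiK rDc chiK.
  - have [g Hg] : ideal_x (rho 'X_(ord0 : 'I_2)) by apply: rX; exists 1; rewrite mul1r.
    exists (psi g); rewrite /r'.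
    have -> : chi K (xS K) = 'X_(ord0 : 'I_2) by have := chi_hh K ord0; rewrite /hh eqxx.
    by rewrite Hg psiM psiXi /hh eqxx.
move=> f; have := congr1 (chi K) (key (psi f)).
by rewrite /r' !chiK.
Qed.
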